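(* Let $E$ be a finite nonempty set, $f:2^E\to\mathbb{N}$ an integral polymatroid rank function, and let $C_e:\mathbb{N}\times\mathbb{N}\to\mathbb{R}_+$, $e\in E$, be regular functions. Let $D\subseteq\mathbb{N}$ be a set of integers with $\mathbb{B}_f(d)\neq\emptyset$ for all $d\in D$. Then for every $\vec t\in\mathbb{N}^E$, every $d\in D$, every optimal solution $\vec x^*(\vec t,d)$ of $P(\vec t,d)$, every $d'\in D$ and every $\vec t'\in\mathbb{N}^E$, there is an optimal solution $\vec x^*(\vec t',d')$ of $P(\vec t',d')$ that can be obtained from $\vec x^*(\vec t,d)$ by performing at most $\|\vec t-\vec t'\|+|d-d'|$ elementary exchange steps.
   Context: $\mathbb{N}=\{0,1,2,\dots\}$. A set function $f:2^E\to\mathbb{N}$ is an integral polymatroid rank function if $f(\emptyset)=0$, $f$ is monotone and submodular. For $\vec x\in\mathbb{N}^E$, $x(U)=\sum_{e\in U}x_e$; $\mathbb{B}_f(d)=\{\vec x\in\mathbb{N}^E: x(U)\le f(U)\ \forall U\subseteq E,\ x(E)=d\}$. $P(\vec t,d)$: minimize $\sum_{e\in E}C_e(x_e;t_e)$ subject to $\vec x\in\mathbb{B}_f(d)$. $\|\cdot\|$ is the $L_1$-norm. For $C:\mathbb{N}\times\mathbb{N}\to\mathbb{R}$, $C^-(x;t)=C(x;t)-C(x-1;t)$ for $x\ge1$; $C$ is regular if $C^-(x;t)\le C^-(x;t+1)$ and $C^-(x;t+1)\le C^-(x+1;t)$ for all $x\ge1$, $t\in\mathbb{N}$. An elementary exchange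 step modifies the current integral vector either by shifting one unit from one element to another (adding $\chi_g-\chi_e$ for some $e\neq g$, $\chi_e$ the unit vector of $e$) or by adding (or removing) one unit at a single element. *)

(* Defs.v *)
From HB Require Import structures.
From mathcomp Require Import all_boot all_order all_algebra.
Set Implicit Arguments. Unset Strict Implicit. Unset Printing Implicit Defensive.
Import Order.TTheory GRing.Theory Num.Theory.

Definition polymatroid_rank (T : finType) (f : {set T} -> nat) : Prop :=
  [/\ f set0 = 0,
      (forall A B : {set T}, A \subset B -> f A <= f B) &
      (forall A B : {set T}, f (A :|: B) + f (A :&: B) <= f A + f B)].

Definition xsum (T : finType) (x : {ffun T -> nat}) (U : {set T}) : nat :=
  \sum_(e in U) x e.

Definition inB (T : finType) (f : {set T} -> nat) (d : nat) (x : {ffun T -> nat}) : Prop :=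
  (forall U : {set T}, xsum x U <= f U) /\ xsum x [set: T] = d.

(* C^-(x;t) = C(x;t) - C(x-1;t), for x >= 1 *)
Definition Cminus (R : realFieldType) (C : nat -> nat -> R) (x t : nat) : R :=
  (C x t - C x.-1 t)%R.

Definition regular (R : realFieldType) (C : nat -> nat -> R) : Prop :=
  forall x t : nat, 1 <= x ->
    (Cminus C x t <= Cminus C x t.+1)%R /\ (Cminus C x t.+1 <= Cminus C x.+1 t)%R.

Definition cost (R : realFieldType) (T : finType) (C : T -> nat -> nat -> R)
  (t x : {ffun T -> nat}) : R := (\sum_(e : T) C e (x e) (t e))%R.

Definition optimal (R : realFieldType) (T : finType) (f : {set T} -> nat)
  (C : T -> nat -> nat -> R) (t : {ffun T -> nat}) (d : nat) (x : {ffun T -> nat}) : Prop :=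
  inB f d x /\ forall y, inB f d y -> (cost C t x <= cost C t y)%R.

Definition elem_step (T : finType) (x y : {ffun T -> nat}) : Prop :=
  (exists e g : T, e != g /\ x e = (y e).+1 /\ y g = (x g).+1 /\
     forall h, h != e -> h != g -> y h = x h)
  \/ (exists e : T, y e = (x e).+1 /\ forall h, h != e -> y h = x h)
  \/ (exists e : T, x e = (y e).+1 /\ forall h, h != e -> y h = x h).

Fixpoint reach_le (T : finType) (k : nat) (x y : {ffun T -> nat}) : Prop :=
  match k with
  | 0 => x = y
  | k'.+1 => x = y \/ exists z, elem_step x z /\ reach_le k' z y
  end.

Definition distn (a b : nat) : nat := (a - b) + (b - a).

Definition l1dist (T : finType) (t t' : {ffun T -> nat}) : nat :=
  \sum_(e : T) distn (t e) (t' e).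

(* Main.v *)
Require Import Defs.
From HB Require Import structures.
From mathcomp Require Import all_boot all_order all_algebra.
From mathcomp Require Import zify ring lra.
Import Order.TTheory GRing.Theory Num.Theory.
Set Implicit Arguments. Unset Strict Implicit. Unset Printing Implicit Defensive.

Section Basic.
Variable T : finType.
Implicit Types x y z : {ffun T -> nat}.

Definition addu x (e : T) : {ffun T -> nat} := [ffun h => x h + (h == e)].
Definition subu x (e : T) : {ffun T -> nat} := [ffun h => x h - (h == e)].
Definition mv x (e g : T) := addu (subu x e) g.
Definition Pf (h : {set T} -> nat) x := forall U, xsum x U <= h U.
Definition dist x y := \sum_(h : T) distn (x h) (y h).

Lemma sum_ind1 (U : {set T}) (g : T) : \sum_(e in U) (e == g : nat) = (g \in U).
Proof.
case: (boolP (g \in U)) => gU.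
  rewrite (bigD1 g) //= eqxx big1 // => i /andP [_ /negbTE ->] //.
rewrite big1 // => i iU; case: eqP => // ig; subst; by rewrite iU in gU.
Qed.

Lemma xsum_addu x g U : xsum (addu x g) U = xsum x U + (g \in U).
Proof.
rewrite /xsum -sum_ind1 -big_split /=; apply: eq_bigr => i _; by rewrite ffunE.
Qed.

Lemma xsum_subu x e U : 0 < x e -> xsum (subu x e) U + (e \in U) = xsum x U.
Proof.
move=> xe; rewrite /xsum -sum_ind1 -big_split /=; apply: eq_bigr => i _.
rewrite ffunE; case: eqP => [->|_] /=; lia.
Qed.

Lemma xsum_mv x e g U : 0 < x e -> xsum (mv x e g) U + (e \in U) = xsum x U + (g \in U).
Proof. move=> xe; rewrite /mv xsum_addu -(xsum_subu U xe); lia. Qed.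

Lemma mvE x e g h : mv x e g h = x h - (h == e) + (h == g).
Proof. by rewrite /mv !ffunE. Qed.

Lemma xsum_split x (S U : {set T}) : xsum x S = xsum x (S :&: U) + xsum x (S :\: U).
Proof. by rewrite /xsum (big_setID U). Qed.

Lemma xsum_sub x (A B : {set T}) : A \subset B -> xsum x A <= xsum x B.
Proof.
move=> AB; rewrite (xsum_split x B A) setIC.
by move/setIidPl: AB => ->; apply: leq_addr.
Qed.

Lemma xsum_UI x (A B : {set T}) : xsum x (A :|: B) + xsum x (A :&: B) = xsum x A + xsum x B.
Proof.
rewrite (xsum_split x (A :|: B) B) (xsum_split x A B).
have -> : (A :|: B) :&: B = B by apply/setIidPr; apply: subsetUr.
rewrite setDUl setDv setU0; lia.
Qed.

Lemma sum_lt (A : {set T}) (F G : T -> nat) a : (forall i, i \in A -> F i <= G i) ->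
  a \in A -> F a < G a -> \sum_(i in A) F i < \sum_(i in A) G i.
Proof.
move=> le aA lt; rewrite (bigD1 a) //= [X in _ < X](bigD1 a) //=.
have : \sum_(i in A | i != a) F i <= \sum_(i in A | i != a) G i.
  by apply: leq_sum => i /andP [iA _]; apply: le.
lia.
Qed.

End Basic.

Section Exch.
Variable T : finType.
Variable h : {set T} -> nat.
Hypothesis h0 : h set0 = 0.
Hypothesis hsub : forall A B : {set T}, h (A :|: B) + h (A :&: B) <= h A + h B.
Implicit Types x y z p q : {ffun T -> nat}.

Lemma tight z A B : Pf h z -> xsum z A = h A -> xsum z B = h B ->
  xsum z (A :&: B) = h (A :&: B) /\ xsum z (A :|: B) = h (A :|: B).
Proof.
move=> Pz tA tB; have := xsum_UI z A B; have := hsub A B.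
have := Pz (A :&: B); have := Pz (A :|: B); lia.
Qed.



Lemma exch p q a : Pf h p -> Pf h q -> q a < p a ->
  Pf h (addu q a) \/
  exists b, [/\ b != a, p b < q b, Pf h (mv q b a) & Pf h (mv p a b)].
Proof.
move=> Pp Pq lt.
case: (boolP [forall U, xsum (addu q a) U <= h U]) => [/forallP H|]; first by left.
rewrite negb_forall => /existsP [U0]; rewrite -ltnNge xsum_addu => HU0.
right.
have aU0 : a \in U0.
  case: (boolP (a \in U0)) => // aU; rewrite (negbTE aU) /= in HU0.
  have := Pq U0; lia.
have t0 : xsum q U0 = h U0 by rewrite aU0 /= in HU0; have := Pq U0; lia.
pose PS := fun U : {set T} => (xsum q U == h U) && (a \in U).
have PS0 : PS U0 by rewrite /PS t0 eqxx aU0.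
case: (@arg_minnP _ U0 PS (fun U : {set T} => #|U|) PS0) => S /andP [/eqP tS aS] minS.
pose PT := fun U : {set T} => (xsum p U == h U) && (a \notin U).
have PT0 : PT set0 by rewrite /PT /xsum big_set0 h0 eqxx in_set0.
case: (@arg_maxnP _ set0 PT (fun U : {set T} => #|U|) PT0) => T' /andP [/eqP tT aT] maxT.
have Smin : forall U, xsum q U = h U -> a \in U -> S \subset U.
  move=> U tU aU; have [tI _] := tight Pq tS tU.
  have := minS (S :&: U); rewrite /PS tI eqxx inE aS aU => /(_ isT) H.
  have /eqP E : S :&: U == S by rewrite eqEcard subsetIl H.
  by rewrite -E subsetIr.
have Tmax : forall U, xsum p U = h U -> a \notin U -> U \subset T'.
  move=> U tU aU; have [_ tU'] := tight Pp tT tU.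
  have := maxT (T' :|: U); rewrite /PT tU' eqxx inE negb_or aT aU => /(_ isT) H.
  have /eqP E : T' == T' :|: U by rewrite eqEcard subsetUl; exact: H.
  by rewrite E subsetUr.
have key : xsum p (S :\: T') <= xsum q (S :\: T').
  have := hsub S T'; have := Pp (S :|: T'); have := Pq (S :&: T').
  have := xsum_split q S T'.
  have := xsum_split p (S :|: T') T'.
  have -> : (S :|: T') :&: T' = T' by apply/setIidPr; apply: subsetUr.
  rewrite setDUl setDv setU0; lia.
case: (boolP [exists b in S :\: T', p b < q b]); last first.
  rewrite negb_exists => /forallP H; exfalso.
  have : xsum q (S :\: T') < xsum p (S :\: T').
    apply: (@sum_lt _ _ _ _ a) => //.
      move=> i iST; have := H i; rewrite iST /=; lia.
    by rewrite inE aS aT.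
  lia.
case/exists_inP => b; rewrite inE => /andP [bT bS] ltb.
have ba : b != a by apply/eqP => E; subst; lia.
exists b; split => //.
- move=> U; have := xsum_mv a U (_ : 0 < q b); have := Pq U.
  case: (boolP (a \in U)) => aU; case: (boolP (b \in U)) => bU /=;
   rewrite ?(negbTE aU) ?(negbTE bU) /=; try lia.
  have : xsum q U != h U.
    apply/eqP => E; have := Smin U E aU => /subsetP /(_ b bS); by rewrite (negbTE bU).
  lia.
- move=> U; have := xsum_mv b U (_ : 0 < p a); have := Pp U.
  case: (boolP (a \in U)) => aU; case: (boolP (b \in U)) => bU /=;
   rewrite ?(negbTE aU) ?(negbTE bU) /=; try lia.
  have : xsum p U != h U.
    apply/eqP => E; have := Tmax U E aU => /subsetP /(_ b bU); by rewrite (negbTE bT).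
  lia.
Qed.

End Exch.

Section Poly.
Variable T : finType.
Variable f : {set T} -> nat.
Hypothesis pm : polymatroid_rank f.
Implicit Types x y z p q : {ffun T -> nat}.

Lemma inB_Pf d x : inB f d x -> Pf f x.
Proof. by case. Qed.

Lemma inB_mv d z e g : inB f d z -> 0 < z e -> Pf f (mv z e g) -> inB f d (mv z e g).
Proof.
move=> [_ s] ze P; split => //; have := xsum_mv g [set: T] ze; rewrite !in_setT s /=; lia.
Qed.

Lemma exchB d x y e : inB f d x -> inB f d y -> y e < x e ->
  exists g, [/\ g != e, x g < y g, Pf f (mv y g e) & Pf f (mv x e g)].
Proof.
case: pm => f0 fmon fsub [Px sx] [Py sy] lt.
pose h := fun U => minn (f U) d.
have h0 : h set0 = 0 by rewrite /h f0; lia.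
have hsub : forall A B : {set T}, h (A :|: B) + h (A :&: B) <= h A + h B.
  move=> A B; rewrite /h.
  have := fsub A B; have := fmon _ _ (subsetIl A B); have := fmon _ _ (subsetIr A B).
  have := fmon _ _ (subsetUl A B); have := fmon _ _ (subsetUr A B); lia.
have Ph : forall z, Pf f z -> xsum z [set: T] = d -> Pf h z.
  move=> z Pz sz U; rewrite /h leq_min Pz /= -sz; apply: xsum_sub; exact: subsetT.
have hf : forall z, Pf h z -> Pf f z.
  move=> z Pz U; apply: leq_trans (Pz U) _; exact: geq_minl.
case: (exch h0 hsub (Ph _ Px sx) (Ph _ Py sy) lt) => [H|[b [ba lb P1 P2]]].
  have := H [set: T]; rewrite xsum_addu in_setT sy /h /=; lia.
by exists b; split => //; apply: hf.
Qed.

Lemma downB m z k : inB f m z -> k <= m -> exists w, inB f k w.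
Proof.
move=> Bz; move: {2}(m - k) (erefl (m - k)) => j; elim: j m z Bz => [|j IH] m z Bz E km.
  have -> : k = m by lia. by exists z.
have [e ze] : exists e, 0 < z e.
  case: (boolP [exists e, 0 < z e]) => [/existsP //|].
  rewrite negb_exists => /forallP H; case: Bz => _ s.
  have : xsum z [set: T] = 0 by rewrite /xsum big1 // => i _; have := H i; lia.
  lia.
case: Bz => Pz sz.
apply: (IH m.-1 (subu z e)); try lia.
split.
  move=> U; have := xsum_subu U ze; have := Pz U; lia.
have := xsum_subu [set: T] ze; rewrite in_setT sz /=; lia.
Qed.

End Poly.

Section Cost.
Variable R : realFieldType.
Variable T : finType.
Variable C : T -> nat -> nat -> R.
Implicit Types x y z : {ffun T -> nat}.
Local Open Scope ring_scope.

Lemma cost_one t x y g : (forall h, h != g -> y h = x h) ->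
  cost C t y = cost C t x + (C g (y g) (t g) - C g (x g) (t g)).
Proof.
move=> H; rewrite /cost (bigD1 g) //= [in RHS](bigD1 g) //=.
rewrite (eq_bigr (fun e => C e (x e) (t e))); first by ring.
by move=> i ig; rewrite H.
Qed.

Lemma cost_addu t x g : cost C t (addu x g) = cost C t x + Cminus (C g) (x g).+1 (t g).
Proof.
rewrite (@cost_one t x _ g) /Cminus ?ffunE ?eqxx ?addn1 //.
by move=> h hg; rewrite ffunE (negbTE hg) addn0.
Qed.

Lemma cost_subu t x e : cost C t (subu x e) = cost C t x - Cminus (C e) (x e) (t e).
Proof.
rewrite (@cost_one t x _ e) /Cminus ?ffunE ?eqxx ?subn1.
  by rewrite opprB.
by move=> h hg; rewrite ffunE (negbTE hg) subn0.
Qed.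

Lemma cost_mv t x e g : e != g -> cost C t (mv x e g) =
  cost C t x - Cminus (C e) (x e) (t e) + Cminus (C g) (x g).+1 (t g).
Proof.
move=> eg; rewrite /mv cost_addu cost_subu ffunE eq_sym (negbTE eg) subn0 //.
Qed.

Lemma convex (c : nat -> nat -> R) t n m : regular c -> (1 <= n)%N -> (n <= m)%N -> Cminus c n t <= Cminus c m t.
Proof.
move=> rg n1 nm; rewrite -(subnKC nm); elim: (m - n)%N => [|k IH]; first by rewrite addn0.
apply: le_trans IH _; rewrite addnS.
have [h1 h2] := rg (n + k)%N t (leq_trans n1 (leq_addr _ _)).
exact: le_trans h1 h2.
Qed.

End Cost.

Section Misc.
Variable T : finType.
Implicit Types x y z u w : {ffun T -> nat}.

Lemma sum_ltT (F G : T -> nat) a : (forall i, F i <= G i) ->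
  F a < G a -> \sum_i F i < \sum_i G i.
Proof.
move=> le lt; rewrite (bigD1 a) //= [X in _ < X](bigD1 a) //=.
have : \sum_(i | i != a) F i <= \sum_(i | i != a) G i by apply: leq_sum => i _; apply: le.
lia.
Qed.

Lemma eq_le_sum u w : (forall h, u h <= w h) -> xsum u [set: T] = xsum w [set: T] -> u = w.
Proof.
move=> le s; apply/ffunP => h; apply/eqP; case: (boolP (u h == w h)) => // ne.
have lt : u h < w h by have := le h; move: ne; lia.
have : xsum u [set: T] < xsum w [set: T] by apply: (@sum_lt T [set: T] u w h) => //; rewrite in_setT.
lia.
Qed.

Lemma step_mv x e g : 0 < x e -> e != g -> elem_step x (mv x e g).
Proof.
move=> xe eg; left; exists e, g; split => //; rewrite !mvE eqxx (negbTE eg) eq_sym (negbTE eg) /=.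
split; first by rewrite addn0 subn1 prednK.
split; first by rewrite subn0 eqxx addn1.
by move=> h he hg; rewrite mvE (negbTE he) (negbTE hg) subn0 addn0.
Qed.

Lemma mv_inv z g a : 0 < z g -> g != a -> mv (mv z g a) a g = z.
Proof.
move=> zg ga; apply/ffunP => h; rewrite !mvE.
case: (boolP (h == a)) => ha; case: (boolP (h == g)) => hg /=.
- by move: ga; rewrite -(eqP ha) -(eqP hg) eqxx.
- lia.
- move/eqP: hg => hg; subst; lia.
- lia.
Qed.

Lemma reach_refl k x : reach_le k x x.
Proof. by case: k => [|k] /=; [|left]. Qed.

Lemma reach_mono k k' x y : reach_le k x y -> k <= k' -> reach_le k' x y.
Proof.
elim: k k' x => [|k IH] [|k'] x /= H le //.
- by subst; left.
- case: H => [->|[z [s r]]]; first by left.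
  by right; exists z; split => //; apply: IH.
Qed.

Lemma reach_trans a b x y z : reach_le a x y -> reach_le b y z -> reach_le (a + b) x z.
Proof.
elim: a x => [|a IH] x /=; first by move=> ->.
move=> H r2; rewrite ?addSn.
case: H => [->|[w [s r]]].
  by change (reach_le (a + b).+1 y z); apply: (reach_mono r2); lia.
right; exists w; split => //; exact: IH.
Qed.

Lemma reach_step x y : elem_step x y -> reach_le 1 x y.
Proof. by move=> s; right; exists y. Qed.

Lemma descent (Y : Type) (P : Prop) (Q : Y -> Prop) (m : Y -> nat) :
  (forall v : Y, Q v -> P \/ exists v' : Y, Q v' /\ m v' < m v) -> (exists v : Y, Q v) -> P.
Proof.
move=> H [v Qv]; move: {2}(m v) (leqnn (m v)) => n.
elim: n v Qv => [|n IH] v Qv le; case: (H v Qv) => [//|[v' [Qv' lt]]].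
- lia.
- apply: (IH v') => //; lia.
Qed.

End Misc.

Section Opt.
Variable R : realFieldType.
Variable T : finType.
Variable f : {set T} -> nat.
Hypothesis pm : polymatroid_rank f.
Variable C : T -> nat -> nat -> R.
Hypothesis Creg : forall e, regular (C e).
Implicit Types x y z u w : {ffun T -> nat}.

Lemma exists_opt t d : (exists z, inB f d z) -> exists y, optimal f C t d y.
Proof.
move=> [z Bz].
pose conv (v : {ffun T -> 'I_d.+1}) : {ffun T -> nat} := [ffun e => nat_of_ord (v e)].
pose P v := [forall U, xsum (conv v) U <= f U] && (xsum (conv v) [set: T] == d).
have bnd : forall y, inB f d y -> forall e, y e < d.+1.
  move=> y [_ sy] e; rewrite ltnS -sy.
  have <- : xsum y [set e] = y e by rewrite /xsum big_set1.
  by apply: xsum_sub; apply: subsetT.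
have convK : forall y, inB f d y -> conv [ffun e => inord (y e)] = y.
  move=> y By; apply/ffunP => e; rewrite !ffunE inordK //; exact: bnd.
have PB : forall y, inB f d y -> P [ffun e => inord (y e)].
  move=> y By; rewrite /P convK //; case: By => Py -> ; rewrite eqxx andbT.
  by apply/forallP.
have P0 := PB z Bz.
case: (@arg_minP _ _ _ _ P (fun v => cost C t (conv v)) P0) => vm Pvm minv.
exists (conv vm); split.
  by move: Pvm => /andP [/forallP H /eqP s].
move=> y By; rewrite -(convK y By); exact: minv (PB y By).
Qed.

Lemma improve t t' d d' x y e g :
  optimal f C t d x -> optimal f C t' d' y -> e != g -> y e < x e -> x g < y g ->
  Pf f (mv x e g) -> Pf f (mv y g e) ->
  (Cminus (C e) (y e).+1 (t' e) <= Cminus (C e) (x e) (t e))%R ->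
  (Cminus (C g) (x g).+1 (t g) <= Cminus (C g) (y g) (t' g))%R ->
  optimal f C t' d' (mv y g e) /\ dist x (mv y g e) < dist x y.
Proof.
move=> [Bx ox] [By oy] eg lte ltg P1 P2 i1 i2.
have xe : 0 < x e by lia.
have yg : 0 < y g by lia.
have Bx' := inB_mv Bx xe P1.
have By' := inB_mv By yg P2.
have c1 := ox _ Bx'; rewrite cost_mv // in c1.
split.
  split => // z Bz; apply: le_trans (oy z Bz).
  rewrite cost_mv 1?eq_sym //; lra.
rewrite /dist; apply: (@sum_ltT _ _ _ e).
  move=> h /=; rewrite mvE /distn.
  case: (boolP (h == g)) => hg; case: (boolP (h == e)) => he /=.
  - by move: eg; rewrite -(eqP he) (eqP hg) eqxx.
  - rewrite (eqP hg); lia.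
  - rewrite (eqP he); lia.
  - lia.
rewrite /= mvE eqxx (negbTE eg) /distn /=; lia.
Qed.


Lemma exists_lt x y : xsum x [set: T] < xsum y [set: T] -> exists g, x g < y g.
Proof.
move=> lt; case: (boolP [exists g, x g < y g]) => [/existsP //|].
rewrite negb_exists => /forallP H.
have : xsum y [set: T] <= xsum x [set: T].
  by apply: leq_sum => i _; have := H i; lia.
lia.
Qed.

Lemma Dup1 t d x : optimal f C t d x -> (exists z, inB f d.+1 z) ->
  exists x', optimal f C t d.+1 x' /\ elem_step x x'.
Proof.
move=> [Bx ox] ex.
have [f0 _ fsub] := pm.
apply: (@descent _ _ (optimal f C t d.+1) (dist x)); last exact: exists_opt ex.
move=> y [By oy].
have [g ltg] : exists g, x g < y g.
  by apply: exists_lt; case: Bx => _ ->; case: By => _ ->.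
have yg : 0 < y g by lia.
case: (exch f0 fsub (inB_Pf By) (inB_Pf Bx) ltg) => [Pa | [b [bg ltb P1 P2]]].
- left; exists (addu x g); split; last first.
    right; left; exists g; split; first by rewrite ffunE eqxx addn1.
    by move=> h hg; rewrite ffunE (negbTE hg) addn0.
  have Ba : inB f d.+1 (addu x g).
    by split => //; rewrite xsum_addu in_setT; case: Bx => _ -> ; rewrite addn1.
  split => // z Bz; apply: le_trans (oy z Bz).
  have Bs : inB f d (subu y g).
    split.
      move=> U; have := xsum_subu U yg; have := inB_Pf By U; lia.
    have := xsum_subu [set: T] yg; rewrite in_setT; case: By => _ -> /=; lia.
  have c := ox _ Bs; rewrite cost_subu in c; rewrite cost_addu.
  have cv : (Cminus (C g) (x g).+1 (t g) <= Cminus (C g) (y g) (t g))%R.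
    by apply: convex.
  lra.
- right.
  have i1 : (Cminus (C b) (y b).+1 (t b) <= Cminus (C b) (x b) (t b))%R by apply: convex.
  have i2 : (Cminus (C g) (x g).+1 (t g) <= Cminus (C g) (y g) (t g))%R by apply: convex.
  have [opt lt] := improve (conj Bx ox) (conj By oy) bg ltb ltg P1 P2 i1 i2.
  by exists (mv y g b).
Qed.

Lemma Ddown1 t d x : optimal f C t d.+1 x ->
  exists x', optimal f C t d x' /\ elem_step x x'.
Proof.
move=> [Bx ox].
have [f0 _ fsub] := pm.
apply: (@descent _ _ (optimal f C t d) (dist x)); last first.
  by apply: exists_opt; apply: (downB Bx (leqnSn d)).
move=> y [By oy].
have [e lte] : exists e, y e < x e.
  by apply: exists_lt; case: Bx => _ ->; case: By => _ ->.
have xe : 0 < x e by lia.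
case: (exch f0 fsub (inB_Pf Bx) (inB_Pf By) lte) => [Pa | [b [be ltb P1 P2]]].
- left; exists (subu x e); split; last first.
    right; right; exists e; split; first by rewrite ffunE eqxx subn1 prednK.
    by move=> h he; rewrite ffunE (negbTE he) subn0.
  have Bs : inB f d (subu x e).
    split.
      move=> U; have := xsum_subu U xe; have := inB_Pf Bx U; lia.
    have := xsum_subu [set: T] xe; rewrite in_setT; case: Bx => _ -> /=; lia.
  split => // z Bz; apply: le_trans (oy z Bz).
  have Ba : inB f d.+1 (addu y e).
    by split => //; rewrite xsum_addu in_setT; case: By => _ -> ; rewrite addn1.
  have c := ox _ Ba; rewrite cost_addu in c; rewrite cost_subu.
  have cv : (Cminus (C e) (y e).+1 (t e) <= Cminus (C e) (x e) (t e))%R.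
    by apply: convex.
  lra.
- right.
  have i1 : (Cminus (C e) (y e).+1 (t e) <= Cminus (C e) (x e) (t e))%R by apply: convex.
  have i2 : (Cminus (C b) (x b).+1 (t b) <= Cminus (C b) (y b) (t b))%R by apply: convex.
  have eb : e != b by rewrite eq_sym.
  have [opt lt] := improve (conj Bx ox) (conj By oy) eb lte ltb P2 P1 i1 i2.
  by exists (mv y b e).
Qed.


Lemma Tup (t t' : {ffun T -> nat}) (a : T) d x : t' a = (t a).+1 -> (forall h, h != a -> t' h = t h) ->
  optimal f C t d x -> exists x', optimal f C t' d x' /\ reach_le 1 x x'.
Proof.
move=> ta th [Bx ox].
apply: (@descent _ _ (optimal f C t' d) (dist x)); last exact: exists_opt (ex_intro _ x Bx).
move=> y [By oy].
case: (boolP [exists e, (y e < x e) && ((e != a) || ((y e).+1 < x e))]).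
- case/existsP => e /andP [lte cond]; right.
  have [g [ge ltg P2 P1]] := exchB pm Bx By lte.
  have i1 : (Cminus (C e) (y e).+1 (t' e) <= Cminus (C e) (x e) (t e))%R.
    case: (boolP (e == a)) => ea.
    + move/eqP: ea => ea; subst e; move: cond; rewrite eqxx /= => c2.
      rewrite ta; have [_ r2] := @Creg a ((y a).+1) (t a) (ltn0Sn _).
      by apply: le_trans r2 _; apply: convex.
    + by rewrite th //; apply: convex.
  have i2 : (Cminus (C g) (x g).+1 (t g) <= Cminus (C g) (y g) (t' g))%R.
    case: (boolP (g == a)) => ga.
    + move/eqP: ga => ga; subst g.
      have ya1 : 1 <= y a by lia.
      rewrite ta; have [r1 _] := @Creg a (y a) (t a) ya1.
      by apply: le_trans r1; apply: convex.
    + by rewrite th //; apply: convex.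
  have eg : e != g by rewrite eq_sym.
  have [opt lt] := improve (conj Bx ox) (conj By oy) eg lte ltg P1 P2 i1 i2.
  by exists (mv y g e).
- rewrite negb_exists => /forallP H; left.
  have H' : forall h, h != a -> x h <= y h.
    by move=> h ha; have := H h; rewrite ha /= andbT -leqNgt.
  have Ha : x a <= (y a).+1.
    by have := H a; rewrite eqxx /= negb_and -!leqNgt => /orP [] ; lia.
  case: (boolP (y a < x a)) => ya.
  + have [g [ga ltg P2 P1]] := exchB pm Bx By ya.
    have yg : 0 < y g by lia.
    have E : x = mv y g a.
      apply: eq_le_sum.
        move=> h; rewrite mvE.
        case: (boolP (h == g)) => hg; case: (boolP (h == a)) => ha /=.
        * by move: ga; rewrite -(eqP hg) (eqP ha) eqxx.
        * rewrite (eqP hg); lia.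
        * rewrite (eqP ha); lia.
        * have := H' h ha; lia.
      by case: Bx => _ ->; case: (inB_mv By yg P2) => _ ->.
    have Ey : y = mv x a g by rewrite E mv_inv.
    exists y; split => //; rewrite Ey; apply: reach_step; apply: step_mv.
      lia.
    by rewrite eq_sym.
  + have E : x = y.
      apply: eq_le_sum.
        move=> h; case: (boolP (h == a)) => ha; last exact: H'.
        by rewrite (eqP ha) leqNgt.
      by case: Bx => _ ->; case: By => _ ->.
    by exists y; split => //; rewrite E; apply: reach_refl.
Qed.

Lemma Tdown (t t' : {ffun T -> nat}) (a : T) d x : t a = (t' a).+1 -> (forall h, h != a -> t' h = t h) ->
  optimal f C t d x -> exists x', optimal f C t' d x' /\ reach_le 1 x x'.
Proof.
move=> ta th [Bx ox].
apply: (@descent _ _ (optimal f C t' d) (dist x)); last exact: exists_opt (ex_intro _ x Bx).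
move=> y [By oy].
case: (boolP [exists g, (x g < y g) && ((g != a) || ((x g).+1 < y g))]).
- case/existsP => g /andP [ltg cond]; right.
  have [e [eg lte P1 P2]] := exchB pm By Bx ltg.
  have i1 : (Cminus (C e) (y e).+1 (t' e) <= Cminus (C e) (x e) (t e))%R.
    case: (boolP (e == a)) => ea.
    + move/eqP: ea => ea; subst e.
      rewrite ta; have [r1 _] := @Creg a ((y a).+1) (t' a) (ltn0Sn _).
      by apply: le_trans r1 _; apply: convex.
    + by rewrite th //; apply: convex.
  have i2 : (Cminus (C g) (x g).+1 (t g) <= Cminus (C g) (y g) (t' g))%R.
    case: (boolP (g == a)) => ga.
    + move/eqP: ga => ga; subst g; move: cond; rewrite eqxx /= => c2.
      have ya1 : 1 <= (y a).-1 by lia.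
      rewrite ta; have [_ r2] := @Creg a (y a).-1 (t' a) ya1.
      rewrite prednK in r2; last by lia.
      apply: le_trans _ r2; apply: convex; [exact: Creg | lia | lia].
    + by rewrite th //; apply: convex.
  have [opt lt] := improve (conj Bx ox) (conj By oy) eg lte ltg P1 P2 i1 i2.
  by exists (mv y g e).
- rewrite negb_exists => /forallP H; left.
  have H' : forall h, h != a -> y h <= x h.
    by move=> h ha; have := H h; rewrite ha /= andbT -leqNgt.
  have Ha : y a <= (x a).+1.
    by have := H a; rewrite eqxx /= negb_and -!leqNgt => /orP [] ; lia.
  case: (boolP (x a < y a)) => xa.
  + have [e [ea lte P1 P2]] := exchB pm By Bx xa.
    have ya : 0 < y a by lia.
    have E : mv y a e = x.
      apply: eq_le_sum.
        move=> h; rewrite mvE.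
        case: (boolP (h == a)) => ha; case: (boolP (h == e)) => he /=.
        * by move: ea; rewrite -(eqP he) (eqP ha) eqxx.
        * rewrite (eqP ha); lia.
        * rewrite (eqP he); lia.
        * have := H' h ha; lia.
      by case: Bx => _ ->; case: (inB_mv By ya P2) => _ ->.
    have Ey : y = mv x e a by rewrite -E mv_inv // eq_sym.
    exists y; split => //; rewrite Ey; apply: reach_step; apply: step_mv => //.
    lia.
  + have E : x = y.
      apply/esym/eq_le_sum.
        move=> h; case: (boolP (h == a)) => ha; last exact: H'.
        by rewrite (eqP ha) leqNgt.
      by case: Bx => _ ->; case: By => _ ->.
    by exists y; split => //; rewrite E; apply: reach_refl.
Qed.

End Opt.

Section Main.
Variable R : realFieldType.
Variable T : finType.
Variable f : {set T} -> nat.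
Hypothesis pm : polymatroid_rank f.
Variable C : T -> nat -> nat -> R.
Hypothesis Creg : forall e, regular (C e).
Implicit Types x y z u w : {ffun T -> nat}.

Lemma l1_step (t t1 t' : {ffun T -> nat}) a : (forall h, h != a -> t1 h = t h) ->
  distn (t a) (t' a) = (distn (t1 a) (t' a)).+1 -> l1dist t t' = (l1dist t1 t').+1.
Proof.
move=> th da; rewrite /l1dist (bigD1 a) //= [in RHS](bigD1 a) //= da addSn.
congr (_ + _).+1; apply: eq_bigr => h ha; by rewrite th.
Qed.

Lemma Tpath n : forall (t t' : {ffun T -> nat}) x d, l1dist t t' = n ->
  optimal f C t d x -> exists x', optimal f C t' d x' /\ reach_le n x x'.
Proof.
elim: n => [|n IH] t t' x d E ox.
  have Et : t = t'.
    apply/ffunP => e; have : distn (t e) (t' e) <= l1dist t t'.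
      by rewrite /l1dist (bigD1 e) //= leq_addr.
    rewrite E /distn; lia.
  by rewrite -Et; exists x; split.
have [a ta] : exists a, t a != t' a.
  case: (boolP [exists a, t a != t' a]) => [/existsP //|].
  rewrite negb_exists => /forallP H.
  have : l1dist t t' = 0.
    by rewrite /l1dist big1 // => i _; have := H i; rewrite negbK => /eqP ->; rewrite /distn; lia.
  by rewrite E.
case: (ltngtP (t a) (t' a)) => lt; last by rewrite lt eqxx in ta.
- have h1 : addu t a a = (t a).+1 by rewrite ffunE eqxx addn1.
  have h2 : forall h, h != a -> addu t a h = t h.
    by move=> h ha; rewrite ffunE (negbTE ha) addn0.
  have [x1 [o1 r1]] := @Tup _ _ _ pm _ Creg t (addu t a) a d x h1 h2 ox.
  have E1 : l1dist (addu t a) t' = n.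
    suff : l1dist t t' = (l1dist (addu t a) t').+1 by rewrite E => [[]].
    apply: (l1_step (a := a)).
      by move=> h ha; rewrite ffunE (negbTE ha) addn0.
    rewrite ffunE eqxx /distn /=; lia.
  have [x' [o' r']] := IH _ _ _ _ E1 o1.
  by exists x'; split => //; apply: (reach_trans r1 r').
- have h1 : t a = (subu t a a).+1 by rewrite ffunE eqxx subn1 prednK //; lia.
  have h2 : forall h, h != a -> subu t a h = t h.
    by move=> h ha; rewrite ffunE (negbTE ha) subn0.
  have [x1 [o1 r1]] := @Tdown _ _ _ pm _ Creg t (subu t a) a d x h1 h2 ox.
  have E1 : l1dist (subu t a) t' = n.
    suff : l1dist t t' = (l1dist (subu t a) t').+1 by rewrite E => [[]].
    apply: (l1_step (a := a)).
      by move=> h ha; rewrite ffunE (negbTE ha) subn0.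
    rewrite ffunE eqxx /distn /=; lia.
  have [x' [o' r']] := IH _ _ _ _ E1 o1.
  by exists x'; split => //; apply: (reach_trans r1 r').
Qed.

Lemma Dup (t : {ffun T -> nat}) k : forall d x, optimal f C t d x ->
  (exists z, inB f (d + k) z) -> exists x', optimal f C t (d + k) x' /\ reach_le k x x'.
Proof.
elim: k => [|k IH] d x ox [z Bz].
  by exists x; rewrite addn0.
have ex1 : exists z, inB f d.+1 z by apply: (downB Bz); lia.
have [x1 [o1 s1]] := @Dup1 _ _ _ pm _ Creg t d x ox ex1.
have Bz' : inB f (d.+1 + k) z by rewrite addSnnS.
have [x' [o' r']] := IH d.+1 x1 o1 (ex_intro _ z Bz').
rewrite addSnnS in o'.
by exists x'; split => //; right; exists x1.
Qed.

Lemma Ddown (t : {ffun T -> nat}) k : forall d x, optimal f C t (d + k) x ->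
  exists x', optimal f C t d x' /\ reach_le k x x'.
Proof.
elim: k => [|k IH] d x ox.
  by exists x; rewrite addn0 in ox.
rewrite addnS in ox.
have [x1 [o1 s1]] := @Ddown1 _ _ _ pm _ Creg t (d + k) x ox.
have [x' [o' r']] := IH d x1 o1.
by exists x'; split => //; right; exists x1.
Qed.

End Main.

Theorem corollary3p6 (R : realFieldType) (T : finType) (f : {set T} -> nat)
  (C : T -> nat -> nat -> R) (D : nat -> Prop) :
  0 < #|T| ->
  polymatroid_rank f ->
  (forall e x t, (0 <= C e x t)%R) ->
  (forall e, regular (C e)) ->
  (forall d, D d -> exists x, inB f d x) ->
  forall (t : {ffun T -> nat}) (d : nat) (x : {ffun T -> nat}),
    D d -> optimal f C t d x ->
  forall (d' : nat) (t' : {ffun T -> nat}), D d' ->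
    exists x' : {ffun T -> nat},
      optimal f C t' d' x' /\ reach_le (l1dist t t' + distn d d') x x'.
Proof.
move=> _ pm _ Creg Dfeas t d x Dd ox d' t' Dd'.
have [z Bz] := Dfeas d' Dd'.
have [x1 [o1 r1]] : exists x1, optimal f C t d' x1 /\ reach_le (distn d d') x x1.
  case: (leqP d d') => dd.
    have Bz' : inB f (d + (d' - d)) z by rewrite subnKC.
    have [x1 [o1 r1]] := @Dup _ _ _ pm _ Creg t (d' - d) d x ox (ex_intro _ z Bz').
    rewrite subnKC // in o1.
    by exists x1; split => //; apply: (reach_mono r1); rewrite /distn; lia.
  have ox' : optimal f C t (d' + (d - d')) x by rewrite subnKC // ltnW.
  have [x1 [o1 r1]] := @Ddown _ _ _ pm _ Creg t (d - d') d' x ox'.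
  by exists x1; split => //; apply: (reach_mono r1); rewrite /distn; lia.
have [x2 [o2 r2]] := @Tpath _ _ _ pm _ Creg (l1dist t t') t t' x1 d' erefl o1.
by exists x2; split => //; rewrite addnC; apply: (reach_trans r1 r2).
Qed.
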